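(* Let $X$ be a topological space. The following are equivalent: (1) $X$ is dense-ultraconnected; (2) for every point $x\in X$, either $\overline{\{x\}}=X$, or the only open neighborhood of $x$ in the subspace $Y_x=\{x\}\cup(X\setminus\overline{\{x\}})$ is $Y_x$ itself; (3) for any two points $x,y\in X$, $x\in\overline{\{y\}}$ or $y\in\overline{\{x\}}$.
   Context: A space is ultraconnected if it contains no two disjoint non-empty closed subsets. A space $X$ is dense-ultraconnected if every dense subset of $X$ (with the subspace topology) is ultraconnected. *)

(* Defs.v *)
From mathcomp Require Import all_boot all_classical.
From mathcomp Require Import topology_theory.topology_structure.
Set Implicit Arguments. Unset Strict Implicit. Unset Printing Implicit Defensive.
Local Open Scope classical_set_scope.

Definition ultraconnected (T : topologicalType) :=
  forall A B : set T, closed A -> closed B -> A !=set0 -> B !=set0 -> A `&` B !=set0.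

Definition subspace_closed (T : topologicalType) (D A : set T) :=
  exists C : set T, closed C /\ A = D `&` C.
Definition subspace_open (T : topologicalType) (D U : set T) :=
  exists V : set T, open V /\ U = D `&` V.

Definition ultraconnected_subspace (T : topologicalType) (D : set T) :=
  forall A B : set T, subspace_closed D A -> subspace_closed D B ->
    A !=set0 -> B !=set0 -> A `&` B !=set0.

Definition dense_ultraconnected (T : topologicalType) :=
  forall D : set T, dense D -> ultraconnected_subspace D.

Definition Yx (T : topologicalType) (x : T) : set T :=
  [set x] `|` ~` closure [set x].

(* Main.v *)
Require Import Defs.
From mathcomp Require Import all_boot all_classical.
From mathcomp Require Import topology_theory.topology_structure.
Local Open Scope classical_set_scope.

Section H.
Context {T : topologicalType}.

Lemma cl_open (x z : T) (V : set T) :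
  closure [set x] z -> open V -> V z -> V x.
Proof.
move=> cz oV Vz; have [w [/= -> Vw]] := cz V (open_nbhs_nbhs (conj oV Vz)).
by [].
Qed.

Lemma cl_intro (x z : T) :
  (forall V : set T, open V -> V z -> V x) -> closure [set x] z.
Proof.
move=> H B; rewrite nbhsE => -[V [oV Vz] VB].
by exists x; split => //; apply: VB; apply: H.
Qed.

Lemma cl_closed (x z : T) (C : set T) :
  closed C -> C x -> closure [set x] z -> C z.
Proof.
move=> cC Cx cz; move/closure_id: cC => ->.
by apply: (closureS _ cz) => w /= ->.
Qed.
End H.
Arguments cl_open {T x z V}.
Arguments cl_closed {T x z C}.

Theorem theorem5p8 (T : topologicalType) :
  (dense_ultraconnected T <->
   (forall x : T, closure [set x] = setT \/
      (forall U : set T, subspace_open (Yx x) U -> U x -> U = Yx x)))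
  /\
  ((forall x : T, closure [set x] = setT \/
      (forall U : set T, subspace_open (Yx x) U -> U x -> U = Yx x)) <->
   (forall x y : T, closure [set y] x \/ closure [set x] y)).
Proof.
have h23 : (forall x : T, closure [set x] = setT \/
      (forall U : set T, subspace_open (Yx x) U -> U x -> U = Yx x)) ->
   (forall x y : T, closure [set y] x \/ closure [set x] y).
  move=> H x y; case: (H x) => [-> | Hx]; first by right.
  have [yx|nyx] := pselect (closure [set x] y); first by right.
  left; apply: cl_intro => V oV Vx.
  have E := Hx (Yx x `&` V) (ex_intro _ V (conj oV erefl)) (conj (or_introl erefl) Vx).
  have : (Yx x `&` V) y by rewrite E; right.
  by case.
have h32 : (forall x y : T, closure [set y] x \/ closure [set x] y) ->
  (forall x : T, closure [set x] = setT \/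
      (forall U : set T, subspace_open (Yx x) U -> U x -> U = Yx x)).
  move=> H x; right => U [V [oV ->]] [_ Vx].
  apply/seteqP; split => [z [] //|z Yz]; split => //.
  case: Yz => [-> //|nz].
  case: (H x z) => c; last by case: nz.
  exact: (cl_open c oV Vx).
have h31 : (forall x y : T, closure [set y] x \/ closure [set x] y) ->
  dense_ultraconnected T.
  move=> H D _ A B [C1 [c1 ->]] [C2 [c2 ->]] [a [Da C1a]] [b [Db C2b]].
  case: (H a b) => c.
    by exists a; split; split => //; exact: (cl_closed c2 C2b c).
  by exists b; split; split => //; exact: (cl_closed c1 C1a c).
have h13 : dense_ultraconnected T ->
  (forall x y : T, closure [set y] x \/ closure [set x] y).
  move=> H x y.
  have [c|nc1] := pselect (closure [set y] x); first by left.
  have [c|nc2] := pselect (closure [set x] y); first by right.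
  exfalso.
  pose D := [set x; y] `|` ~` (closure [set x] `|` closure [set y]).
  have dD : dense D.
    move=> O [o Oo] oO.
    have [cx|ncx] := pselect (closure [set x] o).
      by exists x; split; [exact: (cl_open cx oO Oo)|left; left].
    have [cy|ncy] := pselect (closure [set y] o).
      by exists y; split; [exact: (cl_open cy oO Oo)|left; right].
    by exists o; split => //; right => -[].
  have [z [[Dz Cxz] [_ Cyz]]] := H D dD (D `&` closure [set x]) (D `&` closure [set y])
    (ex_intro _ (closure [set x]) (conj (@closed_closure T _) erefl))
    (ex_intro _ (closure [set y]) (conj (@closed_closure T _) erefl))
    (ex_intro _ x (conj (or_introl (or_introl erefl)) (subset_closure (erefl x))))
    (ex_intro _ y (conj (or_introl (or_intror erefl)) (subset_closure (erefl y)))).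
  case: Dz => [[ez|ez]|nz].
  - by rewrite ez in Cyz.
  - by rewrite ez in Cxz.
  - by apply: nz; left.
split; split; auto.
Qed.
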